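(* Let $\mathcal{B}$ be a prime Banach algebra over $\mathbb{R}$ or $\mathbb{C}$ and let $D$ be a dense subset of $\mathcal{B}$. Suppose $\mathcal{B}$ admits a continuous automorphism $f$ and there exist fixed positive integers $p,q$ such that $$f(x^{p}\circ y^{q})+[x^{p},y^{q}]\in Z(\mathcal{B})\quad\text{for all } x,y\in D.$$ Then $\mathcal{B}$ is commutative.
   Context: $Z(\mathcal{B})$ denotes the center of $\mathcal{B}$. For $x,y\in\mathcal{B}$, $x\circ y=xy+yx$ and $[x,y]=xy-yx$. $\mathcal{B}$ is prime if $x\mathcal{B}y=\{0\}$ implies $x=0$ or $y=0$. An automorphism of $\mathcal{B}$ is a bijective map $f:\mathcal{B}\to\mathcal{B}$ with $f(x+y)=f(x)+f(y)$ and $f(xy)=f(x)f(y)$ for all $x,y$. *)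

(* Defs.v *)
From HB Require Import structures.
From mathcomp Require Import all_boot all_order all_algebra.
From mathcomp Require Import all_classical all_reals all_analysis.
From mathcomp Require Import complex.
Import Order.TTheory GRing.Theory Num.Theory.
Import numFieldNormedType.Exports.
Local Open Scope ring_scope.
Local Open Scope classical_set_scope.
Set Implicit Arguments. Unset Strict Implicit. Unset Printing Implicit Defensive.

Definition scalars (R : realType) (b : bool) : numFieldType :=
  if b then (complex R : numFieldType) else (R : numFieldType).

Definition banach_algebra_mul (K : numFieldType) (B : completeNormedModType K)
  (mul : B -> B -> B) : Prop :=
  associative mul /\
  (forall x y z, mul (x + y) z = mul x z + mul y z) /\
  (forall x y z, mul x (y + z) = mul x y + mul x z) /\
  (forall (a : K) x y, mul (a *: x) y = a *: mul x y) /\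
  (forall (a : K) x y, mul x (a *: y) = a *: mul x y) /\
  (forall x y, `|mul x y| <= `|x| * `|y|).

(* x^n for n >= 1 (for n = 0 we return x; only n >= 1 is used). *)
Definition alg_pow (T : Type) (mul : T -> T -> T) (x : T) (n : nat) : T :=
  iter n.-1 (mul x) x.

Definition alg_jordan (T : Type) (add : T -> T -> T) (mul : T -> T -> T) x y :=
  add (mul x y) (mul y x).

Definition alg_center (K : numFieldType) (B : completeNormedModType K)
  (mul : B -> B -> B) : set B :=
  [set z | forall x, mul z x = mul x z].

Definition alg_commutator (K : numFieldType) (B : completeNormedModType K)
  (mul : B -> B -> B) (x y : B) : B := mul x y - mul y x.

Definition prime_alg (K : numFieldType) (B : completeNormedModType K)
  (mul : B -> B -> B) : Prop :=
  forall x y : B, (forall b, mul (mul x b) y = 0) -> x = 0 \/ y = 0.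

Definition alg_automorphism (K : numFieldType) (B : completeNormedModType K)
  (mul : B -> B -> B) (f : B -> B) : Prop :=
  [/\ bijective f,
      (forall x y, f (x + y) = f x + f y) &
      (forall x y, f (mul x y) = mul (f x) (f y))].

Definition commutative_alg (K : numFieldType) (B : completeNormedModType K)
  (mul : B -> B -> B) : Prop := forall x y, mul x y = mul y x.

(* Main.v *)
Require Import Defs.
From HB Require Import structures.
From mathcomp Require Import all_boot all_order all_algebra.
From mathcomp Require Import all_classical all_reals all_analysis.
From mathcomp Require Import complex.
From mathcomp Require Import ring.
Import Order.TTheory GRing.Theory Num.Theory.
Import numFieldNormedType.Exports.
Local Open Scope ring_scope.
Local Open Scope classical_set_scope.
Set Implicit Arguments. Unset Strict Implicit. Unset Printing Implicit Defensive.
Lemma poly0 (K : numFieldType) (V : lmodType K) (d : nat) (v : nat -> V) :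
  (forall t : K, \sum_(j < d.+1) t ^+ j *: v j = 0) -> forall j, (j <= d)%N -> v j = 0.
Proof.
elim: d v => [|d IH] v Hv j.
  rewrite leqn0 => /eqP ->; have := Hv 1; rewrite big_ord1 expr1n scale1r; done.
move=> jd.
have Hw : forall t : K, \sum_(i < d.+1) t ^+ i *: ((2 ^+ i - 2 ^+ d.+1) *: v i) = 0.
  move=> t.
  have -> : \sum_(i < d.+1) t ^+ i *: ((2 ^+ i - 2 ^+ d.+1) *: v i) =
            \sum_(i < d.+2) t ^+ i *: ((2 ^+ i - 2 ^+ d.+1) *: v i).
    by rewrite [RHS]big_ord_recr /= subrr scale0r scaler0 addr0.
  have -> : \sum_(i < d.+2) t ^+ i *: ((2 ^+ i - 2 ^+ d.+1) *: v i) =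
     \sum_(i < d.+2) (2 * t) ^+ i *: v i - (2 ^+ d.+1 : K) *: \sum_(i < d.+2) t ^+ i *: v i.
    rewrite scaler_sumr -sumrB; apply: eq_bigr => i _.
    rewrite !scalerA -scalerBl; congr (_ *: _); rewrite exprMn; ring.
  by rewrite !Hv scaler0 subr0.
have Hlow : forall i, (i <= d)%N -> v i = 0.
  move=> i id; have := IH (fun i => (2 ^+ i - 2 ^+ d.+1) *: v i) Hw i id; move/eqP; rewrite scaler_eq0 => /orP[|/eqP//].
  rewrite subr_eq0 => /eqP /(congr1 (fun x => x < 2 ^+ d.+1)); rewrite ltxx.
  by rewrite ltr_eXn2l ?ltr1n // ltnS id.
move: jd; rewrite leq_eqVlt => /orP[/eqP ->|]; last by rewrite ltnS; exact: Hlow.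
have := Hv 1; rewrite big_ord_recr /= big1 ?add0r ?expr1n ?scale1r //.
by move=> i _; rewrite Hlow ?scaler0 // -ltnS.
Qed.
Lemma amul0l (K : numFieldType) (B : completeNormedModType K) (mul : B -> B -> B) :
  banach_algebra_mul mul -> forall y, mul 0 y = 0.
Proof.
move=> [_ [Hl _]] y; have h := Hl 0 0 y; rewrite addr0 in h.
by apply: (addrI (mul 0 y)); rewrite -h addr0.
Qed.

Lemma amul0r (K : numFieldType) (B : completeNormedModType K) (mul : B -> B -> B) :
  banach_algebra_mul mul -> forall y, mul y 0 = 0.
Proof.
move=> [_ [_ [Hr _]]] y; have h := Hr y 0 0; rewrite addr0 in h.
by apply: (addrI (mul y 0)); rewrite -h addr0.
Qed.

Lemma amulBl (K : numFieldType) (B : completeNormedModType K) (mul : B -> B -> B) :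
  banach_algebra_mul mul -> forall x y z, mul (x - y) z = mul x z - mul y z.
Proof.
move=> H x y z; have [_ [Hl _]] := H.
apply: (addIr (mul y z)); rewrite -Hl subrK addrNK //.
Qed.

Lemma amulBr (K : numFieldType) (B : completeNormedModType K) (mul : B -> B -> B) :
  banach_algebra_mul mul -> forall x y z, mul x (y - z) = mul x y - mul x z.
Proof.
move=> H x y z; have [_ [_ [Hr _]]] := H.
apply: (addIr (mul x z)); rewrite -Hr subrK addrNK //.
Qed.


Lemma mul_sumr (K : numFieldType) (B : completeNormedModType K) (mul : B -> B -> B)
  (H : banach_algebra_mul mul) a n (F : 'I_n -> B) :
  mul a (\sum_(j < n) F j) = \sum_(j < n) mul a (F j).
Proof.
have [_ [_ [Hr _]]] := H.
by apply: (big_morph (mul a) (Hr a) (amul0r H a)).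
Qed.

Lemma mul_suml (K : numFieldType) (B : completeNormedModType K) (mul : B -> B -> B)
  (H : banach_algebra_mul mul) a n (F : 'I_n -> B) :
  mul (\sum_(j < n) F j) a = \sum_(j < n) mul (F j) a.
Proof.
have [_ [Hl _]] := H.
by apply: (big_morph (mul^~ a) (fun x y => Hl x y a) (amul0l H a)).
Qed.

Lemma pow_add (K : numFieldType) (B : completeNormedModType K) (mul : B -> B -> B)
  (H : banach_algebra_mul mul) x a b :
  mul (alg_pow mul x a.+1) (alg_pow mul x b.+1) = alg_pow mul x (a + b).+2.
Proof.
have [Ha _] := H.
elim: a => [//|a IH].
by rewrite addSn; change (mul (mul x (alg_pow mul x a.+1)) (alg_pow mul x b.+1) =
  mul x (alg_pow mul x (a + b).+2)); rewrite -Ha IH.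
Qed.

Definition central (K : numFieldType) (B : completeNormedModType K) (mul : B -> B -> B) (v : B) :=
  forall w, mul v w = mul w v.

Lemma cent_coef (K : numFieldType) (B : completeNormedModType K) (mul : B -> B -> B)
  (H : banach_algebra_mul mul) d (v : nat -> B) :
  (forall t : K, central mul (\sum_(j < d.+1) t ^+ j *: v j)) ->
  forall j, (j <= d)%N -> central mul (v j).
Proof.
have [_ [_ [_ [Hsl [Hsr _]]]]] := H.
move=> Hc j jd w; apply/eqP; rewrite -subr_eq0; apply/eqP.
apply: (@poly0 K B d (fun j => mul (v j) w - mul w (v j))) => // t.
have := Hc t w; rewrite (mul_suml H) (mul_sumr H) => /eqP; rewrite -subr_eq0 -sumrB => /eqP E.
apply: etrans E; apply: eq_bigr => i _; by rewrite Hsl Hsr scalerBr.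
Qed.

Fixpoint cf (K : numFieldType) (B : completeNormedModType K) (mul : B -> B -> B)
  (x y : B) (k j : nat) : B :=
  match k with
  | 0 => if j == 0%N then x else if j == 1%N then y else 0
  | k'.+1 => match j with
             | 0 => mul x (cf mul x y k' 0)
             | j'.+1 => mul x (cf mul x y k' j) + mul y (cf mul x y k' j')
             end
  end.

Lemma cf_0 (K : numFieldType) (B : completeNormedModType K) (mul : B -> B -> B) x y k :
  cf mul x y k 0 = alg_pow mul x k.+1.
Proof. by elim: k => //= k ->. Qed.

Lemma cf_big (K : numFieldType) (B : completeNormedModType K) (mul : B -> B -> B)
  (H : banach_algebra_mul mul) x y k j : (k.+1 < j)%N -> cf mul x y k j = 0.
Proof.
elim: k j => [|k IH] [|j] //=.
  by case: j => [|j].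
move=> kj; rewrite !IH // ?(ltnW kj) // ?(amul0r H) ?addr0 //.
Qed.

Lemma cf_expand (K : numFieldType) (B : completeNormedModType K) (mul : B -> B -> B)
  (H : banach_algebra_mul mul) x y k (t : K) :
  alg_pow mul (x + t *: y) k.+1 = \sum_(j < k.+2) t ^+ j *: cf mul x y k j.
Proof.
have [Ha [Hl [Hr [Hsl [Hsr _]]]]] := H.
elim: k => [|k IH].
  by rewrite /= big_ord_recr /= big_ord1 expr0 scale1r expr1.
change (mul (x + t *: y) (alg_pow mul (x + t *: y) k.+1) =
   \sum_(j < k.+3) t ^+ j *: cf mul x y k.+1 j).
rewrite IH Hl Hsl (mul_sumr H) (mul_sumr H) [RHS]big_ord_recl /=.
have -> : \sum_(i < k.+2) t ^+ bump 0 i *: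
     (mul x (cf mul x y k (bump 0 i)) + mul y (cf mul x y k (0 + i))) =
   \sum_(i < k.+2) t ^+ i.+1 *: mul x (cf mul x y k i.+1) +
   \sum_(i < k.+2) t ^+ i.+1 *: mul y (cf mul x y k i).
  by rewrite -big_split; apply: eq_bigr => i _; rewrite scalerDr.
rewrite addrA; congr (_ + _).
  have -> : t ^+ 0 *: mul x (cf mul x y k 0) +
     \sum_(i < k.+2) t ^+ i.+1 *: mul x (cf mul x y k i.+1) =
     \sum_(j < k.+3) t ^+ j *: mul x (cf mul x y k j) by rewrite [RHS]big_ord_recl.
  rewrite [RHS]big_ord_recr /= cf_big // (amul0r H) scaler0 addr0.
  by apply: eq_bigr => i _; rewrite Hsr.
rewrite scaler_sumr; apply: eq_bigr => i _.
by rewrite Hsr scalerA exprS.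
Qed.


Lemma central_natK (K : numFieldType) (B : completeNormedModType K) (mul : B -> B -> B)
  (H : banach_algebra_mul mul) v n : central mul (v *+ n.+1) -> central mul v.
Proof.
have [_ [_ [_ [Hsl [Hsr _]]]]] := H.
move=> Hc w; have := Hc w; rewrite -scaler_nat Hsl Hsr => /eqP.
rewrite -subr_eq0 -scalerBr scaler_eq0 pnatr_eq0 /= subr_eq0.
by move/eqP.
Qed.

Lemma central_regular (K : numFieldType) (B : completeNormedModType K) (mul : B -> B -> B)
  (H : banach_algebra_mul mul) (Hp : prime_alg mul) c u :
  central mul c -> c <> 0 -> mul c u = 0 -> u = 0.
Proof.
have [Ha _] := H.
move=> Hc c0 cu.
have h : forall b, mul (mul c b) u = 0.
  by move=> b; rewrite (Hc b) -Ha cu (amul0r H).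
by case: (Hp c u h).
Qed.


Lemma cf1_central (K : numFieldType) (B : completeNormedModType K) (mul : B -> B -> B)
  (H : banach_algebra_mul mul) x c k : central mul c ->
  cf mul x c k.+1 1 = mul c (alg_pow mul x k.+1) *+ k.+2.
Proof.
have [Ha [Hl [Hr [Hsl [Hsr _]]]]] := H.
move=> Hc; elim: k => [|k IH].
  change (mul x c + mul c x = mul c x *+ 2).
  by rewrite -(Hc x) mulr2n.
change (mul x (cf mul x c k.+1 1) + mul c (cf mul x c k.+1 0) =
   mul c (mul x (alg_pow mul x k.+1)) *+ k.+3).
rewrite IH cf_0 -scaler_nat Hsr Ha -(Hc x) -Ha scaler_nat.
change (alg_pow mul x k.+2) with (mul x (alg_pow mul x k.+1)).
by rewrite [RHS]mulrSr.
Qed.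



Lemma step_down (K : numFieldType) (B : completeNormedModType K) (mul : B -> B -> B)
  (H : banach_algebra_mul mul) (Hp : prime_alg mul) k :
  (forall x, central mul (alg_pow mul x k.+2)) -> forall x, central mul (alg_pow mul x k.+1).
Proof.
have [Ha [Hl [Hr [Hsl [Hsr _]]]]] := H.
move=> Hc.
have C1 : forall x y, central mul (cf mul x y k.+1 1).
  move=> x y; apply: (@cent_coef _ _ _ H k.+2 (cf mul x y k.+1)) => // t.
  by rewrite -cf_expand.
have [[c [c0 cc]]|nc] := pselect (exists c, c <> 0 /\ central mul c).
  move=> x; pose X := alg_pow mul x k.+1.
  have cX : central mul (mul c X).
    by apply: (@central_natK _ _ _ H _ k.+1); rewrite -cf1_central //; exact: C1.
  move=> w; apply/eqP; rewrite -subr_eq0; apply/eqP.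
  apply: (central_regular H Hp cc c0).
  rewrite (amulBr H) Ha (cX w) [mul c (mul w X)]Ha (cc w) -Ha.
  by rewrite subrr.
have Z0 : forall v, central mul v -> v = 0.
  by move=> v cv; apply: contrapT => v0; apply: nc; exists v.
move=> x; pose X := alg_pow mul x k.+1.
suff X0 : X = 0 by move=> w; rewrite -/X X0 (amul0l H) (amul0r H).
suff h : forall y, mul (mul X y) X = 0 by case: (Hp X X h).
move=> y; rewrite -Ha.
have := Z0 _ (C1 x y).
change (mul x (cf mul x y k 1) + mul y (cf mul x y k 0) = 0 -> mul X (mul y X) = 0).
rewrite cf_0 -/X => E.
have : mul X (mul x (cf mul x y k 1) + mul y X) = 0 by rewrite E (amul0r H).
rewrite Hr Ha.
have -> : mul X x = alg_pow mul x k.+2.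
  by rewrite /X (pow_add H x k 0) addn0.
by rewrite (Z0 _ (Hc x)) (amul0l H) add0r.
Qed.
Lemma dense_zero (K : numFieldType) (B : normedModType K) (g : B -> B) (D : set B) :
  continuous g -> dense D -> (forall x, D x -> g x = 0) -> forall x, g x = 0.
Proof.
move=> gc dD gD x; apply: contrapT => gx.
have oO : open (g @^-1` (~` [set 0])).
  apply: open_comp; first by move=> z _; exact: gc.
  rewrite openC; exact/accessible_closed_set1/hausdorff_accessible/norm_hausdorff.
have [z [/= gz Dz]] := dD _ (ex_intro _ x gx) oO.
by apply: gz; rewrite gD.
Qed.

Lemma squeeze0 (K : numFieldType) (B : normedModType K) (T : Type) (F : set_system T)
  (FF : Filter F) (u : T -> B) (h : T -> K) :
  (forall t, `|u t| <= h t) -> h @ F --> 0 -> u @ F --> 0.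
Proof.
move=> uh /cvgr0Pnorm_lt hc; apply/cvgr0Pnorm_lt => e e0.
near=> t; apply: (le_lt_trans (uh t)).
have h0 : 0 <= h t by apply: le_trans (uh t).
rewrite -(ger0_norm h0); near: t; exact: hc.
Unshelve. all: by end_near.
Qed.

Lemma cont_mul (K : numFieldType) (B : completeNormedModType K) (mul : B -> B -> B)
  (a c : B -> B) : banach_algebra_mul mul -> continuous a -> continuous c ->
  continuous (fun z => mul (a z) (c z)).
Proof.
move=> H ac cc z; have [_ [Hl [Hr [_ [_ Hn]]]]] := H.
apply/subr_cvg0.
have E : forall t, mul (a t) (c t) - mul (a z) (c z) =
   mul (a t - a z) (c z) + mul (a z) (c t - c z) + mul (a t - a z) (c t - c z).
  move=> t; rewrite -{1}[a t](subrK (a z)) -{1}[c t](subrK (c z)).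
  move: (a t - a z) (c t - c z) => al be.
  rewrite Hl !Hr.
  rewrite addrA addrK.
  by rewrite [RHS]addrC addrA.
apply: (@squeeze0 _ _ _ _ _ _ (fun t => `|a t - a z| * `|c z| + `|a z| * `|c t - c z|
   + `|a t - a z| * `|c t - c z|)).
  move=> t; rewrite E; apply: (le_trans (ler_normD _ _)); apply: lerD; last exact: Hn.
  apply: (le_trans (ler_normD _ _)); apply: lerD; exact: Hn.
have al : `|a t - a z| @[t --> z] --> (0 : K).
  have h : (fun t => a t - a z) @ z --> (0:B) by apply/subr_cvg0; exact: ac.
  by have := cvg_norm h; rewrite normr0; apply.
have cl : `|c t - c z| @[t --> z] --> (0 : K).
  have h : (fun t => c t - c z) @ z --> (0:B) by apply/subr_cvg0; exact: cc.
  by have := cvg_norm h; rewrite normr0; apply.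
have h1 : `|a t - a z| * `|c z| @[t --> z] --> (0:K).
  by rewrite -(mul0r `|c z|); apply: cvgMr_tmp.
have h2 : `|a z| * `|c t - c z| @[t --> z] --> (0:K).
  by rewrite -(mulr0 `|a z|); apply: cvgMl_tmp.
have h3 : `|a t - a z| * `|c t - c z| @[t --> z] --> (0:K).
  by rewrite -(mulr0 (0:K)); apply: cvgM.
by have := cvgD (cvgD h1 h2) h3; rewrite !addr0; apply.
Qed.


Lemma cont_pow (K : numFieldType) (B : completeNormedModType K) (mul : B -> B -> B)
  (H : banach_algebra_mul mul) n : continuous (fun x => alg_pow mul x n).
Proof.
rewrite /alg_pow; elim: n.-1 => [|k IH] /=.
  by move=> z; exact: cvg_id.
by apply: (cont_mul (a := id) H) => // z; exact: cvg_id.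
Qed.

Lemma down_all (K : numFieldType) (B : completeNormedModType K) (mul : B -> B -> B)
  (H : banach_algebra_mul mul) (Hp : prime_alg mul) m :
  (forall x, central mul (alg_pow mul x m.+1)) -> forall x, central mul x.
Proof.
elim: m => [//|m IH] Hc; apply: IH; exact: step_down.
Qed.

Unset Implicit Arguments.
Local Close Scope classical_set_scope.

Theorem mainTheorem5 (R : realType) (b : bool)
  (B : completeNormedModType (scalars R b)) (mul : B -> B -> B)
  (D : set B) (f : B -> B) (p q : nat) :
  banach_algebra_mul mul ->
  prime_alg mul ->
  dense D ->
  alg_automorphism mul f ->
  continuous f ->
  (0 < p)%N -> (0 < q)%N ->
  (forall x y, D x -> D y ->
     alg_center mul (f (alg_jordan +%R mul (alg_pow mul x p) (alg_pow mul y q))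
                 + alg_commutator mul (alg_pow mul x p) (alg_pow mul y q))) ->
  commutative_alg mul.
Proof.
move=> H Hp dD [fbij fadd fmul] _ p0 q0 Hyp.
have [Ha [Hl [Hr [Hsl [Hsr _]]]]] := H.
have [p' Ep] : exists p', p = p'.+1 by exists p.-1; rewrite prednK.
have [q' Eq] : exists q', q = q'.+1 by exists q.-1; rewrite prednK.
subst p q.
have finj := bij_inj fbij.
have fcent : forall u, central mul (f u) -> central mul u.
  by move=> u cu w; apply: finj; rewrite !fmul cu.
have HD : forall x, D x -> central mul (alg_pow mul x (p' + q').+2).
  move=> x Dx; have := Hyp x x Dx Dx.
  rewrite /alg_jordan /alg_commutator (pow_add H x p' q') (pow_add H x q' p').
  rewrite [(q' + p')%N]addnC subrr addr0 fadd => hc.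
  apply: fcent; apply: (@central_natK _ _ _ H _ 1); rewrite mulr2n; exact: hc.
have Hall : forall x, central mul (alg_pow mul x (p' + q').+2).
  move=> x w; apply/eqP; rewrite -subr_eq0; apply/eqP; move: x.
  apply: (dense_zero _ dD) => [|x Dx]; last by rewrite (HD x Dx w) subrr.
  move=> z; apply: cvgB.
    apply: (cont_mul (a := fun x => alg_pow mul x (p' + q').+2) (c := fun=> w) H).
      exact: cont_pow.
    by move=> y; exact: cvg_cst.
  apply: (cont_mul (c := fun x => alg_pow mul x (p' + q').+2) (a := fun=> w) H).
    by move=> y; exact: cvg_cst.
  exact: cont_pow.
move=> x y; exact: (down_all H Hp Hall x y).
Qed.
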